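(* Let $A'=(c^1,\ldots,c^m)$, $A''=(c^{m+1},\ldots,c^M)$, $A=(c^1,\ldots,c^M)$ be sequences of customer types and $B'=(s^1,\ldots,s^n)$, $B''=(s^{n+1},\ldots,s^N)$, $B=(s^1,\ldots,s^N)$ sequences of server types. Let $K',K'',K$ be the numbers of unmatched customers and $L',L'',L$ the numbers of unmatched servers in the unique complete FCFS matchings of $(A',B')$, of $(A'',B'')$ and of $(A,B)$ respectively. Then $K\le K'+K''$ and $L\le L'+L''$.
   Context: Let $\mathcal{C}=\{c_1,\ldots,c_I\}$ (customer types) and $\mathcal{S}=\{s_1,\ldots,s_J\}$ (server types) be finite sets and $G=(\mathcal{C},\mathcal{S},\mathcal{E})$, $\mathcal{E}\subseteq\mathcal{C}\times\mathcal{S}$, a connected bipartite compatibility graph; a customer of type $c_i$ and a server of type $s_j$ are compatible iff $(c_i,s_j)\in\mathcal{E}$. Given ordered sequences $(c^m)_{m\in T_1}$, $(s^n)_{n\in T_2}$ of types, a matching is a set $A\subseteq T_1\times T_2$ such that $(m,n)\in A\Rightarrow (c^m,s^n)\in\mathcal{E}$ and each index appears in at most one pair. It is complete if there is no unmatched $m$ and unmatched $n$ with $(c^m,s^n)\in\mathcal{E}$. It is FCFS if for every $(m,n)\in A$: for every $l<n$ with $(c^m,s^l)\in\mathcal{E}$ there is $k<m$ with $(k,l)\in A$, and for every $k<m$ with $(c^k,s^n)\in\mathcal{E}$ there is $l<n$ with $(k,l)\in A$. For finite index sets a complete FCFS matching exists and is unique. *)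

(* Defs.v *)
From mathcomp Require Import all_boot.
Set Implicit Arguments. Unset Strict Implicit. Unset Printing Implicit Defensive.

Definition bip_rel (C S : finType) (E : C -> S -> bool) : rel (C + S) :=
  fun x y => match x, y with
             | inl c, inr s => E c s
             | inr s, inl c => E c s
             | _, _ => false
             end.

Definition connected_bip (C S : finType) (E : C -> S -> bool) : Prop :=
  forall x y : C + S, connect (bip_rel E) x y.

(* A pair of finite sequences is given by lengths M, N and type functions
   c : nat -> C (customer at index i < M), s : nat -> S (server j < N).
   A matching is a boolean relation A on indices. *)
Definition is_matching (C S : Type) (E : C -> S -> bool) (M N : nat)
  (c : nat -> C) (s : nat -> S) (A : rel nat) : Prop :=
  [/\ (forall i j, A i j -> [/\ i < M, j < N & E (c i) (s j)]),
      (forall i j j', A i j -> A i j' -> j = j') &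
      (forall i i' j, A i j -> A i' j -> i = i')].

Definition cust_matched (M N : nat) (A : rel nat) (i : nat) : bool :=
  has (A i) (iota 0 N).
Definition serv_matched (M N : nat) (A : rel nat) (j : nat) : bool :=
  has (fun i => A i j) (iota 0 M).

Definition is_complete (C S : Type) (E : C -> S -> bool) (M N : nat)
  (c : nat -> C) (s : nat -> S) (A : rel nat) : Prop :=
  forall i j, i < M -> j < N -> ~~ cust_matched M N A i ->
    ~~ serv_matched M N A j -> ~~ E (c i) (s j).

Definition is_fcfs (C S : Type) (E : C -> S -> bool)
  (c : nat -> C) (s : nat -> S) (A : rel nat) : Prop :=
  forall i j, A i j ->
    (forall l, l < j -> E (c i) (s l) -> exists2 k, k < i & A k l) /\
    (forall k, k < i -> E (c k) (s j) -> exists2 l, l < j & A k l).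

Definition complete_fcfs (C S : Type) (E : C -> S -> bool) (M N : nat)
  (c : nat -> C) (s : nat -> S) (A : rel nat) : Prop :=
  [/\ is_matching E M N c s A, is_complete E M N c s A & is_fcfs E c s A].

Definition unmatched_c (M N : nat) (A : rel nat) : nat :=
  count (fun i => ~~ cust_matched M N A i) (iota 0 M).
Definition unmatched_s (M N : nat) (A : rel nat) : nat :=
  count (fun j => ~~ serv_matched M N A j) (iota 0 N).

(* Main.v *)
Require Import Defs.
From mathcomp Require Import all_boot.
From mathcomp Require Import zify.
Set Implicit Arguments. Unset Strict Implicit. Unset Printing Implicit Defensive.

Section Greedy.
Variables (C S : Type) (E : C -> S -> bool) (s : nat -> S) (NN : nat).
Implicit Types F G : pred nat.

Definition pick (F : pred nat) (x : C) : option nat :=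
  let j := find (fun j => F j && E x (s j)) (iota 0 NN) in
  if j < NN then Some j else None.

Variant pick_spec (F : pred nat) (x : C) : option nat -> Type :=
| PickSome h of h < NN & F h & E x (s h) &
    (forall l, l < h -> F l -> ~~ E x (s l)) : pick_spec F x (Some h)
| PickNone of (forall l, l < NN -> F l -> ~~ E x (s l)) : pick_spec F x None.

Lemma pickP F x : pick_spec F x (pick F x).
Proof.
rewrite /pick.
set P := (fun j => F j && E x (s j)).
case: ifP => hj.
- have hs : has P (iota 0 NN) by rewrite has_find size_iota.
  have := nth_find 0 hs; rewrite nth_iota // add0n => /andP[Fh Eh].
  apply: PickSome => // l hl Fl; apply/negP => El.
  have := before_find 0 hl; rewrite nth_iota ?add0n; last exact: ltn_trans hj.
  by rewrite /P Fl El.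
- have : ~~ has P (iota 0 NN) by rewrite has_find size_iota hj.
  move/hasPn => hn; apply: PickNone => l hl Fl; apply/negP => El.
  by have := hn l; rewrite mem_iota add0n hl /P Fl El => /(_ isT).
Qed.

Lemma pick_eq_some F x h : h < NN -> F h -> E x (s h) ->
  (forall l, l < h -> F l -> ~~ E x (s l)) -> pick F x = Some h.
Proof.
move=> hN Fh Eh mh; case: pickP => [g gN Fg Eg mg|hn].
- case: (ltngtP g h) => [gh|hg|->//].
  + by have := mh g gh Fg; rewrite Eg.
  + by have := mg h hg Fh; rewrite Eh.
- by have := hn h hN Fh; rewrite Eh.
Qed.

Lemma pick_eq_none F x : (forall l, l < NN -> F l -> ~~ E x (s l)) -> pick F x = None.
Proof. by move=> hn; case: pickP => // g gN Fg Eg _; have := hn g gN Fg; rewrite Eg. Qed.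

Lemma pick_ext F G x : F =1 G -> pick F x = pick G x.
Proof. by move=> FG; rewrite /pick (@eq_find _ _ (fun j => G j && E x (s j))) // => j; rewrite FG. Qed.

Fixpoint run (F : pred nat) (cs : seq C) : nat :=
  match cs with
  | [::] => 0
  | x :: cs' => match pick F x with
                | Some h => (run (fun k => F k && (k != h)) cs').+1
                | None => run F cs'
                end
  end.

Lemma run_ext cs : forall F G, F =1 G -> run F cs = run G cs.
Proof.
elim: cs => [//|x cs IH] F G FG /=; rewrite (pick_ext x FG).
case: pick => [h|]; last exact: IH.
by congr (_.+1); apply: IH => k; rewrite FG.
Qed.

Lemma pick_same F G x h g : (forall j, G j -> F j) ->
  F h -> (forall l, l < h -> F l -> ~~ E x (s l)) -> E x (s h) ->
  G g -> E x (s g) -> (forall l, l < g -> G l -> ~~ E x (s l)) -> G h -> g = h.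
Proof.
move=> sGF Fh mh Eh Gg Eg mg Gh.
case: (ltngtP g h) => [gh|hg|->//].
- by have := mh g gh (sGF _ Gg); rewrite Eg.
- by have := mg h hg Gh; rewrite Eh.
Qed.

Lemma run_sub cs : forall F G, (forall j, G j -> F j) -> run G cs <= run F cs.
Proof.
elim: cs => [//|x cs IH] F G sGF /=.
case: (pickP F x) => [h hN Fh Eh mh|nF].
- case: (pickP G x) => [g gN Gg Eg mg|nG].
  + rewrite ltnS; apply: IH => j /andP[Gj jg]; rewrite sGF //=.
    apply/negP => /eqP ejh; subst j.
    by move: jg; rewrite (pick_same sGF Fh mh Eh Gg Eg mg Gj) eqxx.
  + apply: leqW; apply: IH => j Gj; rewrite sGF //=.
    apply/negP => /eqP ejh; subst j.
    by have := nG h hN Gj; rewrite Eh.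
- case: (pickP G x) => [g gN Gg Eg mg|nG].
  + by have := nF g gN (sGF _ Gg); rewrite Eg.
  + exact: IH.
Qed.

Lemma run_rm1 cs : forall F G z, (forall j, G j -> F j) ->
  (forall j, F j -> ~~ G j -> j = z) -> run F cs <= (run G cs).+1.
Proof.
elim: cs => [//|x cs IH] F G z sGF dFG /=.
case: (pickP F x) => [h hN Fh Eh mh|nF].
- case: (pickP G x) => [g gN Gg Eg mg|nG].
  + rewrite ltnS; case: (boolP (G h)) => Gh.
    * have egh := pick_same sGF Fh mh Eh Gg Eg mg Gh; subst g.
      apply: (IH _ _ z) => j; first by move=> /andP[Gj ->]; rewrite sGF.
      move=> /andP[Fj jh]; case: (boolP (G j)) => Gj /=; first by rewrite jh.
      by move=> _; exact: dFG.
    * have hz := dFG h Fh Gh; subst z.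
      apply: (IH _ _ g) => j.
      - move=> /andP[Gj jg]; rewrite sGF //=; apply/negP => /eqP ejh.
        by subst j; rewrite Gj in Gh.
      - move=> /andP[Fj jh]; case: (boolP (G j)) => Gj /=.
          by rewrite negbK => /eqP.
        by move=> _; have := dFG j Fj Gj; move/eqP: jh.
  + rewrite ltnS; apply: run_sub => j /andP[Fj jh].
    have nGh : ~~ G h by apply/negP => Gh; have := nG h hN Gh; rewrite Eh.
    have hz := dFG h Fh nGh; subst z.
    apply/negPn/negP => nGj; have := dFG j Fj nGj; move/eqP: jh; done.
- case: (pickP G x) => [g gN Gg Eg mg|nG].
  + by have := nF g gN (sGF _ Gg); rewrite Eg.
  + exact: (IH _ _ z).
Qed.

Lemma run_split n cs1 : forall cs2 F,
  run (fun j => F j && (j < n)) cs1 + run (fun j => F j && (n <= j)) cs2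
  <= run F (cs1 ++ cs2).
Proof.
elim: cs1 => [|x cs1 IH] cs2 F /=.
  by apply: run_sub => j /andP[].
case: (pickP F x) => [h hN Fh Eh mh|nF].
- case: (ltnP h n) => hn.
  + rewrite (@pick_eq_some _ x h) //; last first.
      by move=> l lh /andP[Fl _]; exact: mh.
      by rewrite Fh.
    rewrite addSn ltnS.
    apply: leq_trans (IH cs2 (fun k => F k && (k != h))).
    apply: leq_add; rewrite leq_eqVlt; apply/orP; left; apply/eqP; apply: run_ext => j.
      by case: (F j); case: (j < n); case: (j != h).
    case: (boolP (n <= j)) => nj; last by rewrite !andbF.
    have -> : j != h by apply/negP => /eqP ejh; subst j; rewrite leqNgt hn in nj.
    by rewrite !andbT.
  + rewrite pick_eq_none; last first.
      move=> l lN /andP[Fl ln]; apply: mh Fl; exact: leq_trans ln hn.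
    apply: leq_trans (_ : _ <= (run (fun j => F j && (j < n)) cs1 +
       run (fun j => (F j && (j != h)) && (n <= j)) cs2).+1) _.
      rewrite -addnS leq_add2l. apply: (@run_rm1 cs2 (fun j => F j && (n <= j)) (fun j => F j && (j != h) && (n <= j)) h).
        by move=> j /andP[/andP[Fj _] ->]; rewrite Fj.
      move=> j /andP[Fj nj]; rewrite Fj nj /= andbT negbK => /eqP; done.
    rewrite ltnS; apply: leq_trans (IH cs2 (fun k => F k && (k != h))).
    rewrite leq_add2r leq_eqVlt; apply/orP; left; apply/eqP; apply: run_ext => j.
    case: (boolP (j < n)) => jn; last by rewrite !andbF.
    have -> : j != h by apply/negP => /eqP ejh; subst j; rewrite ltnNge hn in jn.
    by rewrite !andbT.
- rewrite pick_eq_none; first exact: IH.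
  by move=> l lN /andP[Fl _]; exact: nF.
Qed.
End Greedy.

Section Conn.
Variables (C S : Type) (E : C -> S -> bool) (s : nat -> S) (NN : nat).
Variables (M' N' o : nat) (c : nat -> C) (A : rel nat).
Hypothesis hA : complete_fcfs E M' N' c (fun j => s (o + j)) A.
Hypothesis hNN : o + N' <= NN.

Definition FA i : pred nat := fun j =>
  [&& o <= j, j < o + N' & ~~ has (fun k => A k (j - o)) (iota 0 i)].

Lemma has_iotaS P i : has P (iota 0 i.+1) = has P (iota 0 i) || P i.
Proof. by rewrite -addn1 iotaD has_cat /= orbF. Qed.

Lemma FA_matched i j : A i j -> FA i.+1 =1 (fun k => FA i k && (k != o + j)).
Proof.
case: hA => [[hm hf hi] hc hfc] Aij k; rewrite /FA has_iotaS.
case: (boolP (o <= k)) => //= ok.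
have -> : A i (k - o) = (k == o + j).
  apply/idP/eqP => [Ak|->]; last by rewrite addKn.
  by rewrite -(hf _ _ _ Ak Aij) subnKC.
by case: (k < o + N'); case: has; case: (k == o + j).
Qed.

Lemma FA_unmatched i : ~~ cust_matched M' N' A i -> FA i.+1 =1 FA i.
Proof.
case: hA => [[hm hf hi] hc hfc] nm k; rewrite /FA has_iotaS.
case: (boolP (A i (k - o))) => Ak; last by rewrite orbF.
exfalso; move/negP: nm; apply; apply/hasP; exists (k - o) => //.
by case: (hm _ _ Ak) => _ kN _; rewrite mem_iota add0n kN.
Qed.

Lemma pick_matched i j : A i j -> pick E s NN (FA i) (c i) = Some (o + j).
Proof.
case: hA => [[hm hf hi] hc hfc] Aij.
case: (hm _ _ Aij) => iM jN Eij.
apply: pick_eq_some => //.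
- by rewrite (leq_trans _ hNN) // ltn_add2l.
- rewrite /FA leq_addr ltn_add2l jN /=; apply/hasPn => k; rewrite mem_iota add0n.
  move=> /andP[_ ki]; rewrite addKn; apply/negP => Akj.
  by have := hi _ _ _ Akj Aij => ek; subst k; rewrite ltnn in ki.
- move=> l lj /and3P[ol _ nh]; apply/negP => El.
  have l'j : l - o < j by rewrite ltn_subLR.
  have El' : E (c i) (s (o + (l - o))) by rewrite subnKC.
  case: ((hfc _ _ Aij).1 _ l'j El') => k ki Ak.
  by move/negP: nh; apply; apply/hasP; exists k => //; rewrite mem_iota add0n.
Qed.

Lemma pick_unmatched i : i < M' -> ~~ cust_matched M' N' A i ->
  pick E s NN (FA i) (c i) = None.
Proof.
case: hA => [[hm hf hi] hc hfc] iM nm.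
apply: pick_eq_none => l lN /and3P[ol lo nh]; apply/negP => El.
have El' : E (c i) (s (o + (l - o))) by rewrite subnKC.
have l'N : l - o < N' by rewrite ltn_subLR.
have : ~~ E (c i) (s (o + (l - o))); last by rewrite El'.
apply: hc => //; apply/hasPn => k; rewrite mem_iota add0n => /andP[_ kM].
apply/negP => Ak.
case: (ltngtP k i) => [ki|ik|eki].
- by move/negP: nh; apply; apply/hasP; exists k => //; rewrite mem_iota add0n.
- case: ((hfc _ _ Ak).2 _ ik El') => l2 l2l Al2.
  move/negP: nm; apply; apply/hasP; exists l2 => //.
  by rewrite mem_iota add0n (ltn_trans l2l).
- subst k; move/negP: nm; apply; apply/hasP; exists (l - o) => //.
  by rewrite mem_iota add0n.
Qed.

Lemma conn d : forall i, i + d = M' ->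
  count (cust_matched M' N' A) (iota i d) = run E s NN (FA i) (map c (iota i d)).
Proof.
elim: d => [//|d IH] i hid /=.
rewrite (IH i.+1); last by rewrite addSnnS.
case: (boolP (cust_matched M' N' A i)) => hm.
- move/hasP: (hm) => [j _ Aij]; rewrite (pick_matched Aij) add1n.
  by congr (_.+1); apply: run_ext; exact: FA_matched.
- rewrite pick_unmatched //; last by rewrite -hid -addSnnS leq_addr.
  by rewrite add0n; apply: run_ext; exact: FA_unmatched.
Qed.
End Conn.


Lemma unm_c M N (A : rel nat) : unmatched_c M N A + count (cust_matched M N A) (iota 0 M) = M.
Proof.
rewrite addnC /unmatched_c -[X in _ = X](size_iota 0 M) -(count_predC (cust_matched M N A)).
by congr (_ + _); apply: eq_count.
Qed.

Lemma cust_ineq (C S : Type) (E : C -> S -> bool)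
  (c : nat -> C) (s : nat -> S) (m M n N : nat)
  (hm : m <= M) (hn : n <= N) (A1 A2 A : rel nat)
  (h1 : complete_fcfs E m n c s A1)
  (h2 : complete_fcfs E (M - m) (N - n) (fun i => c (m + i)) (fun j => s (n + j)) A2)
  (h : complete_fcfs E M N c s A) :
  unmatched_c M N A <= unmatched_c m n A1 + unmatched_c (M - m) (N - n) A2.
Proof.
have u := unm_c M N A; have u1 := unm_c m n A1; have u2 := unm_c (M - m) (N - n) A2.
set P := count _ (iota 0 M) in u.
set P1 := count _ (iota 0 m) in u1.
set P2 := count _ (iota 0 (M - m)) in u2.
suff : P1 + P2 <= P by lia.
have eP : P = run E s N (FA N 0 A 0) (map c (iota 0 M)).
  by rewrite /P (@conn C S E s N M N 0 c A h) // add0n.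
have eP1 : P1 = run E s N (FA n 0 A1 0) (map c (iota 0 m)).
  by rewrite /P1 (@conn C S E s N m n 0 c A1 h1) // add0n.
have eP2 : P2 = run E s N (FA (N - n) n A2 0) (map (fun i => c (m + i)) (iota 0 (M - m))).
  by rewrite /P2 (@conn C S E s N (M - m) (N - n) n _ A2 h2) ?subnKC.
rewrite eP eP1 eP2.
have -> : map (fun i => c (m + i)) (iota 0 (M - m)) = map c (iota m (M - m)).
  by have := iotaDl m 0 (M - m); rewrite addn0 => ->; rewrite -map_comp.
have -> : map c (iota 0 M) = map c (iota 0 m) ++ map c (iota m (M - m)).
  by rewrite -map_cat -{1}(subnKC hm) iotaD.
apply: leq_trans (run_split E s N n _ _ (FA N 0 A 0)).
apply: leq_add; rewrite leq_eqVlt; apply/orP; left; apply/eqP; apply: run_ext => j;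
  rewrite /FA /= !andbT add0n.
- by case: (ltnP j n) => jn; rewrite ?andbT ?andbF // (leq_trans jn hn).
- rewrite subnKC //; by case: (j < N); case: (n <= j).
Qed.

Lemma transp (C S : Type) (E : C -> S -> bool) M N c s (A : rel nat) :
  complete_fcfs E M N c s A ->
  complete_fcfs (fun y x => E x y) N M s c (fun j i => A i j).
Proof.
case=> [[hm hf hi] hc hfc]; split.
- split.
  + by move=> j i Aij; case: (hm _ _ Aij).
  + by move=> j i i'; apply: hi.
  + by move=> j j' i; apply: hf.
- by move=> j i jN iM nj ni; apply: hc.
- by move=> j i Aij; case: (hfc _ _ Aij) => H1 H2; split.
Qed.

Theorem lemma3p2 (C S : finType) (E : C -> S -> bool)
  (hE : connected_bip E)
  (c : nat -> C) (s : nat -> S) (m M n N : nat)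
  (hm : m <= M) (hn : n <= N)
  (A1 A2 A : rel nat)
  (h1 : complete_fcfs E m n c s A1)
  (h2 : complete_fcfs E (M - m) (N - n) (fun i => c (m + i)) (fun j => s (n + j)) A2)
  (h : complete_fcfs E M N c s A) :
  unmatched_c M N A <= unmatched_c m n A1 + unmatched_c (M - m) (N - n) A2 /\
  unmatched_s M N A <= unmatched_s m n A1 + unmatched_s (M - m) (N - n) A2.
Proof.
split; first exact: (cust_ineq hm hn h1 h2 h).
exact: (cust_ineq hn hm (transp h1) (transp h2) (transp h)).
Qed.
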